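(* Let $\lambda>0$. For a Yule tree with rate $\lambda$ grown for time $t\ge 0$ from an initial bifurcation (the number of leaves being random), let $I(t)$ and $P(t)$ be the expected sums of the interior and pendant edge lengths respectively. Then $$I(t)=\frac{1}{\lambda}\bigl(e^{\lambda t}+e^{-\lambda t}-2\bigr),\qquad P(t)=\frac{1}{\lambda}\bigl(e^{\lambda t}-e^{-\lambda t}\bigr).$$ Consequently, defining $p(t)=P(t)/(2e^{\lambda t})$ and $i(t)=I(t)/(2e^{\lambda t}-2)$ for $t>0$ (the average pendant and interior edge lengths when the number of leaves takes its expected value $2e^{\lambda t}$), the ratio $p(t)/i(t)$ converges to $1$ exponentially fast as $t\to\infty$: there exist constants $C,c>0$ with $|p(t)/i(t)-1|\le Ce^{-ct}$ for all $t>0$. *)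

(* Defs.v *)
From HB Require Import structures.
From mathcomp Require Import all_boot all_order all_algebra.
From mathcomp Require Import all_classical all_reals all_analysis.
Set Implicit Arguments. Unset Strict Implicit. Unset Printing Implicit Defensive.
Import Order.TTheory GRing.Theory Num.Theory.
Import numFieldNormedType.Exports.
Local Open Scope classical_set_scope.
Local Open Scope ring_scope.

(* Yule tree with birth rate [lam], grown on [0, t] from an initial
   bifurcation at time 0.  A history of the process is described by the
   successive split times s_1 < ... < s_n in (0, t] and, at the j-th split,
   the index of the splitting lineage among the j+1 current ones.
   The state carried along is:
     - [bs]  : the list of birth times of the currently alive lineages
               (initially [:: 0; 0], the two edges out of the root),
     - [acc] : the accumulated length of interior edges (an edge becomes
               interior when its lineage splits: it has length s - birth).
   At time t the pendant edge lengths are t - b for b in bs.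

   Each lineage splits independently at rate lam, so the density of a
   history with n splits w.r.t. Lebesgue measure on the split times and
   counting measure on lineage choices is
     lam^n * exp(- lam * \int_0^t N(s) ds),  N(s) = number of lineages.
   [yuleG n u bs acc] is the contribution of the histories with exactly n
   further splits after time u, given the state at time u, to the
   expectation of the functional [f]; it is written as the iterated
   integral of this density. *)

Definition split_lineage (R : realType) (bs : seq R) (i : nat) (s : R) : seq R :=
  s :: s :: (take i bs ++ drop i.+1 bs).

Fixpoint yuleG (R : realType) (lam t : R) (f : seq R -> R -> \bar R)
    (n : nat) (u : R) (bs : seq R) (acc : R) {struct n} : \bar R :=
  match n with
  | 0 => ((expR (- lam * (size bs)%:R * (t - u)))%:E * f bs acc)%E
  | n'.+1 =>
      integral (@lebesgue_measure R) `[u, t]%classic (fun s : R =>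
        (\sum_(i < size bs)
            ((lam * expR (- lam * (size bs)%:R * (s - u)))%:E
             * yuleG lam t f n' s (split_lineage bs i s)
                     (acc + (s - nth 0 bs i))%R))%E)
  end.

Definition yule_expect (R : realType) (lam t : R) (f : seq R -> R -> \bar R)
  : \bar R :=
  (\sum_(0 <= n <oo) yuleG lam t f n 0%R [:: 0%R; 0%R] 0%R)%E.

Definition yule_I (R : realType) (lam t : R) : \bar R :=
  yule_expect lam t (fun _ acc => acc%:E).

Definition yule_P (R : realType) (lam t : R) : \bar R :=
  yule_expect lam t (fun bs _ => (\sum_(b <- bs) (t - b))%:E).

Definition yule_p (R : realType) (lam t : R) : R :=
  fine (yule_P lam t) / (2 * expR (lam * t)).
Definition yule_i (R : realType) (lam t : R) : R :=
  fine (yule_I lam t) / (2 * expR (lam * t) - 2).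

(* Main.v *)
Require Import Defs.
From HB Require Import structures.
From mathcomp Require Import all_boot all_order all_algebra.
From mathcomp Require Import all_classical all_reals all_analysis.
From mathcomp Require Import zify ring lra.
Import Order.TTheory GRing.Theory Num.Theory.
Local Open Scope ring_scope.
Section Yule.
Import numFieldNormedType.Exports.
Local Open Scope classical_set_scope.
Local Open Scope ring_scope.
Context (R : realType) (lam t : R).
Hypothesis hlam : 0 < lam.
Hypothesis ht : 0 <= t.
Notation mu := (@lebesgue_measure R).

Definition E (k : nat) (u s : R) : R := expR (- lam * k%:R * (s - u)).

Record tri := Tri { ca : nat -> R -> R; cb : nat -> R -> R; cc : nat -> R -> R }.

Definition SD (bs : seq R) : R := \sum_(b <- bs) (t - b).

Definition lin (T : tri) (u : R) (bs : seq R) (acc : R) : R :=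
  ca T (size bs) u * acc + (cb T (size bs) u * SD bs + cc T (size bs) u).

Definition conv (k : nat) (h : R -> R) (u : R) : R :=
  \int[mu]_(s in `[u, t]) (lam * E k u s * h s).

Definition Ha (T : tri) k s := k%:R * ca T k.+1 s.
Definition Hb (T : tri) k s := ca T k.+1 s + (k%:R - 1) * cb T k.+1 s.
Definition Hc (T : tri) k s := - k%:R * (t - s) * ca T k.+1 s
   + 2 * k%:R * (t - s) * cb T k.+1 s + k%:R * cc T k.+1 s.

Definition Op (T : tri) : tri :=
  Tri (fun k => conv k (Ha T k)) (fun k => conv k (Hb T k)) (fun k => conv k (Hc T k)).

Definition ctri (T : tri) := forall k,
  [/\ {within `[0, t], continuous (ca T k)},
      {within `[0, t], continuous (cb T k)} &
      {within `[0, t], continuous (cc T k)}].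

Lemma size_split (bs : seq R) i s : (i < size bs)%N ->
  size (split_lineage bs i s) = (size bs).+1.
Proof.
move=> ib; rewrite /split_lineage /= size_cat size_take size_drop ib.
by lia.
Qed.

Lemma SD_split (bs : seq R) i s : (i < size bs)%N ->
  SD (split_lineage bs i s) = 2 * (t - s) + SD bs - (t - nth 0 bs i).
Proof.
move=> ib; rewrite /SD /split_lineage !big_cons big_cat /=.
rewrite -{3}(cat_take_drop i bs) big_cat /= (drop_nth 0 ib) big_cons.
lra.
Qed.

Lemma sum_nth (bs : seq R) (F : R -> R) :
  \sum_(i < size bs) F (nth 0 bs i) = \sum_(b <- bs) F b.
Proof. by rewrite (big_nth 0) big_mkord. Qed.

Lemma sum_lin T (bs : seq R) acc s :
  \sum_(i < size bs) lin T s (split_lineage bs i s) (acc + (s - nth 0 bs i)) =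
  acc * Ha T (size bs) s + (SD bs * Hb T (size bs) s + Hc T (size bs) s).
Proof.
set k := size bs.
set a := ca T k.+1 s; set b := cb T k.+1 s; set c := cc T k.+1 s.
transitivity (\sum_(i < k) ((a * acc - a * (t - s) + b * (2 * (t - s) + SD bs) + c)
   + (a - b) * (t - nth 0 bs i))).
  apply: eq_bigr => i _; rewrite /lin size_split // SD_split // -/a -/b -/c.
  ring.
rewrite big_split /= -big_distrr /=.
have -> : \sum_(i < k) (t - nth 0 bs i) = SD bs by rewrite /k (sum_nth bs (fun b => t - b)).
rewrite sumr_const card_ord.
rewrite /Ha /Hb /Hc -/a -/b -/c -/k.
rewrite -[_ *+ k]mulr_natr.
ring.
Qed.
Lemma wcM (A : set R) (f g : R -> R) : {within A, continuous f} ->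
  {within A, continuous g} -> {within A, continuous (fun x => f x * g x)}.
Proof. by move=> cf cg x; apply: cvgM; [exact: cf|exact: cg]. Qed.

Lemma wcD (A : set R) (f g : R -> R) : {within A, continuous f} ->
  {within A, continuous g} -> {within A, continuous (fun x => f x + g x)}.
Proof. by move=> cf cg x; apply: cvgD; [exact: cf|exact: cg]. Qed.

Lemma wcC (A : set R) (c : R) : {within A, continuous (fun _ : R => c)}.
Proof. by move=> x; exact: cvg_cst. Qed.

Lemma cont_expaff (c u : R) : continuous (fun s => expR (c * (s - u))).
Proof.
move=> x; apply: continuous_comp; last exact: continuous_expR.
apply: cvgM; first exact: cvg_cst.
by apply: cvgB; [exact: cvg_id|exact: cvg_cst].
Qed.

Lemma wcE k u (A : set R) : {within A, continuous (E k u)}.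
Proof. by apply: continuous_subspaceT; exact: cont_expaff. Qed.

Lemma sub_itv0 {u} : 0 <= u -> `[u, t] `<=` `[0, t].
Proof.
move=> hu x /=; rewrite !in_itv /= => /andP[ux xt].
by rewrite xt andbT (le_trans hu ux).
Qed.

Lemma cont_int (f : R -> R) u : 0 <= u -> {within `[0,t], continuous f} ->
  mu.-integrable `[u,t] (EFin \o f).
Proof.
move=> hu hf; apply: continuous_compact_integrable; first exact: segment_compact.
have := continuous_subspaceW (sub_itv0 hu) hf.
exact.
Qed.

Lemma cont_intE k u (f : R -> R) v : 0 <= v -> {within `[0,t], continuous f} ->
  mu.-integrable `[v,t] (EFin \o (fun s => lam * E k u s * f s)).
Proof.
move=> hv hf; apply: cont_int => //; apply: wcM => //.
by apply: wcM; [exact: wcC|exact: wcE].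
Qed.

Lemma ctri_H T k : ctri T ->
  [/\ {within `[0, t], continuous (Ha T k)},
      {within `[0, t], continuous (Hb T k)} &
      {within `[0, t], continuous (Hc T k)}].
Proof.
move=> /(_ k.+1) [ca1 cb1 cc1].
have ct : {within `[0, t], continuous (fun s : R => t - s)}.
  by apply: continuous_subspaceT => x; apply: cvgB; [exact: cvg_cst|exact: cvg_id].
split.
- by apply: wcM; [exact: wcC|exact: ca1].
- by apply: wcD; [exact: ca1|apply: wcM; [exact: wcC|exact: cb1]].
- apply: wcD; [apply: wcD|].
  + by apply: wcM; [apply: wcM; [exact: wcC|exact: ct]|exact: ca1].
  + by apply: wcM; [apply: wcM; [exact: wcC|exact: ct]|exact: cb1].
  + by apply: wcM; [exact: wcC|exact: cc1].
Qed.

Definition comb T k u (bs : seq R) acc s :=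
  acc * (lam * E k u s * Ha T k s) +
   (SD bs * (lam * E k u s * Hb T k s) + lam * E k u s * Hc T k s).

Lemma comb_pt T u bs acc s :
  \sum_(i < size bs) (lam * E (size bs) u s *
        lin T s (split_lineage bs i s) (acc + (s - nth 0 bs i))) =
  comb T (size bs) u bs acc s.
Proof. by rewrite -big_distrr /= sum_lin /comb; ring. Qed.

Lemma comb_cont T k u bs acc : ctri T ->
  {within `[0,t], continuous (comb T k u bs acc)}.
Proof.
move=> cT; have [ha hb hc] := ctri_H T k cT.
have wEh : forall h, {within `[0,t], continuous h} ->
    {within `[0,t], continuous (fun s => lam * E k u s * h s)}.
  by move=> h ch; apply: wcM => //; apply: wcM; [exact: wcC|exact: wcE].
apply: wcD; first by apply: wcM; [exact: wcC|exact: wEh].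
apply: wcD; last exact: wEh.
by apply: wcM; [exact: wcC|exact: wEh].
Qed.

Lemma comb_R T u bs acc : ctri T -> 0 <= u ->
  \int[mu]_(s in `[u,t]) comb T (size bs) u bs acc s = lin (Op T) u bs acc.
Proof.
move=> cT hu; set k := size bs.
have [ha hb hc] := ctri_H T k cT.
have wEh : forall h, {within `[0,t], continuous h} ->
    {within `[0,t], continuous (fun s => lam * E k u s * h s)}.
  by move=> h ch; apply: wcM => //; apply: wcM; [exact: wcC|exact: wcE].
rewrite /comb RintegralD //; last 2 first.
- by apply: cont_int => //; apply: wcM; [exact: wcC|exact: wEh].
- apply: cont_int => //; apply: wcD; last exact: wEh.
  by apply: wcM; [exact: wcC|exact: wEh].
rewrite RintegralD //; last 2 first.
- by apply: cont_int => //; apply: wcM; [exact: wcC|exact: wEh].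
- by apply: cont_int => //; exact: wEh.
rewrite !RintegralZl //; try exact: cont_intE.
rewrite /lin /= -/k /conv; congr (_ + _); first exact: mulrC.
by congr (_ + _); exact: mulrC.
Qed.

Lemma GL_R T u bs acc : ctri T -> 0 <= u ->
  lin (Op T) u bs acc = \int[mu]_(s in `[u,t])
    (\sum_(i < size bs) (lam * E (size bs) u s *
        lin T s (split_lineage bs i s) (acc + (s - nth 0 bs i)))).
Proof.
move=> cT hu; rewrite -comb_R //; apply: eq_Rintegral => s _; by rewrite comb_pt.
Qed.

Lemma GL_E T u bs acc : ctri T -> 0 <= u ->
  integral mu `[u,t] (fun s => \sum_(i < size bs)
     ((lam * E (size bs) u s)%:E *
      (lin T s (split_lineage bs i s) (acc + (s - nth 0 bs i)))%:E)%E) =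
  (lin (Op T) u bs acc)%:E.
Proof.
move=> cT hu; rewrite -comb_R // /Rintegral fineK; last first.
  by apply: integrable_fin_num => //; apply: cont_int => //; exact: comb_cont.
apply: eq_integral => s _; rewrite -comb_pt -sumEFin.
by apply: eq_bigr => i _; rewrite EFinM.
Qed.
Lemma in_itv0t {u} : u \in `[0, t] -> 0 <= u /\ u <= t.
Proof. by rewrite in_itv /= => /andP[]. Qed.

Lemma conv_cont k h : {within `[0,t], continuous h} ->
  {within `[0,t], continuous (conv k h)}.
Proof.
move=> ch.
pose g s := expR (- lam * k%:R * s) * h s.
have cg : {within `[0,t], continuous g}.
  apply: wcM => //; apply: continuous_subspaceT => x.
  apply: continuous_comp; last exact: continuous_expR.
  by apply: cvgM; [exact: cvg_cst|exact: cvg_id].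
have ig : mu.-integrable `[0,t] (EFin \o g) by exact: cont_int.
apply: (@subspace_eq_continuous _ _ _
   (fun u => lam * expR (lam * k%:R * u) *
     (\int[mu]_(s in `[0,t]) g s - parameterized_integral mu 0 u g))).
  move=> u; rewrite inE /= in_itv /= => /andP[u0 ut].
  rewrite Rintegral_itvB ?bnd_simp //.
  rewrite Rintegral_itv_obnd_cbnd; last first.
    apply: integrableS ig => //; apply: subset_itvr; by rewrite bnd_simp.
  rewrite /conv -RintegralZl //; last exact: cont_int.
  apply: eq_Rintegral => s _; rewrite /E /g.
  have -> : expR (- lam * k%:R * (s - u)) =
      expR (lam * k%:R * u) * expR (- lam * k%:R * s).
    by rewrite -expRD; congr expR; ring.
  ring.
apply: wcM; first apply: wcM; first exact: wcC.
- apply: continuous_subspaceT => x.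
  apply: continuous_comp; last exact: continuous_expR.
  by apply: cvgM; [exact: cvg_cst|exact: cvg_id].
- move=> x; apply: cvgB; first exact: cvg_cst.
  exact: (parameterized_integral_continuous ht ig).
Qed.

Lemma Op_ctri T : ctri T -> ctri (Op T).
Proof.
move=> cT k; have [ha hb hc] := ctri_H T k cT.
by split; apply: conv_cont.
Qed.
Lemma wcEt k (A : set R) : {within A, continuous (fun u => E k u t)}.
Proof.
apply: continuous_subspaceT => x.
apply: continuous_comp; last exact: continuous_expR.
by apply: cvgM; [exact: cvg_cst|apply: cvgB; [exact: cvg_cst|exact: cvg_id]].
Qed.

Lemma iter_ctri n T : ctri T -> ctri (iter n Op T).
Proof. by move=> cT; elim: n => //= n IH; exact: Op_ctri. Qed.

Lemma yuleG_lin (f : seq R -> R -> \bar R) G0 : ctri G0 ->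
  (forall u bs acc, ((E (size bs) u t)%:E * f bs acc)%E = (lin G0 u bs acc)%:E) ->
  forall n u bs acc, 0 <= u ->
  yuleG lam t f n u bs acc = (lin (iter n Op G0) u bs acc)%:E.
Proof.
move=> cG hG; elim=> [|n IH] u bs acc hu; first exact: hG.
rewrite /= -GL_E //; last exact: iter_ctri.
apply: eq_integral => s; rewrite inE /= in_itv /= => /andP[us st].
apply: eq_bigr => i _; rewrite IH //; exact: le_trans hu us.
Qed.

Definition G0I : tri := Tri (fun k u => E k u t) (fun _ _ => 0) (fun _ _ => 0).
Definition G0P : tri := Tri (fun _ _ => 0) (fun k u => E k u t) (fun _ _ => 0).

Lemma ctri_G0I : ctri G0I.
Proof. by move=> k; split; [exact: wcEt|exact: wcC|exact: wcC]. Qed.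
Lemma ctri_G0P : ctri G0P.
Proof. by move=> k; split; [exact: wcC|exact: wcEt|exact: wcC]. Qed.

Lemma yuleG_I n u bs acc : 0 <= u ->
  yuleG lam t (fun _ acc => acc%:E) n u bs acc = (lin (iter n Op G0I) u bs acc)%:E.
Proof.
apply: yuleG_lin; first exact: ctri_G0I.
by move=> u' bs' acc'; rewrite /lin /= -EFinM; congr EFin; ring.
Qed.

Lemma yuleG_P n u bs acc : 0 <= u ->
  yuleG lam t (fun bs _ => (\sum_(b <- bs) (t - b))%:E) n u bs acc =
  (lin (iter n Op G0P) u bs acc)%:E.
Proof.
apply: yuleG_lin; first exact: ctri_G0P.
by move=> u' bs' acc'; rewrite /lin /= -EFinM /SD; congr EFin; ring.
Qed.
Lemma scE (a b : R) : a *: b = a * b. Proof. by []. Qed.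

Lemma deriv_cont (F f : R -> R) : (forall x : R, is_derive x 1 F (f x)) -> continuous F.
Proof.
move=> hF x; have [dF _] := hF x.
exact/differentiable_continuous/derivable1_diffP.
Qed.

Lemma FTCw (F f : R -> R) a b : a <= b -> (forall x : R, is_derive x 1 F (f x)) ->
  {within `[a,b], continuous f} -> \int[mu]_(x in `[a,b]) f x = F b - F a.
Proof.
rewrite le_eqVlt => /predU1P[<- _ _|ab hF cf].
  by rewrite set_itv1 Rintegral_set1 subrr.
have cF := @deriv_cont F f hF.
rewrite /Rintegral (@continuous_FTC2 _ f F a b ab cf) //.
- split.
  + by move=> x _; have [] := hF x.
  + exact/cvg_at_right_filter/cF.
  + exact/cvg_at_left_filter/cF.
- by move=> x _; have [_ <-] := hF x; rewrite derive1E.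
Qed.

Lemma d_E (k : nat) (u x : R) : is_derive x 1 (E k u) (- lam * k%:R * E k u x).
Proof.
rewrite /E; apply: is_derive_eq; rewrite !scE; ring.
Qed.

Lemma harm k (phi dphi H : R -> R) u : 0 <= u -> u <= t ->
  (forall s : R, is_derive s 1 phi (dphi s)) -> {within `[0,t], continuous H} ->
  (forall s, lam * k%:R * phi s - dphi s = lam * H s) ->
  conv k H u = phi u - E k u t * phi t.
Proof.
move=> u0 ut hphi cH hode.
have hd : forall x : R, is_derive x 1 (fun s => - (E k u s * phi s))
    ((fun s => lam * E k u s * H s) x).
  move=> x; apply: is_derive_eq.
  have := hode x => hx.
  have -> : lam * E k u x * H x = E k u x * (lam * H x) by ring.
  rewrite -hx !scE /E; ring.
have hc : {within `[u,t], continuous (fun s => lam * E k u s * H s)}.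
  apply: (continuous_subspaceW (sub_itv0 u0)).
  by apply: wcM => //; apply: wcM; [exact: wcC|exact: wcE].
rewrite /conv (FTCw _ _ _ _ ut hd hc).
by rewrite /E subrr mulr0 expR0 mul1r; ring.
Qed.
Definition ep (u : R) := expR (lam * (t - u)).
Definition em (u : R) := expR (- lam * (t - u)).

Definition PhiI : tri := Tri (fun _ _ => 1) (fun _ u => 1 - em u)
  (fun k u => k%:R * ((ep u + em u - 2) / (2 * lam) - (t - u) * (1 - em u))).
Definition PhiP : tri := Tri (fun _ _ => 0) (fun _ u => em u)
  (fun k u => k%:R * ((ep u - em u) / (2 * lam) - (t - u) * em u)).

Lemma lam_neq0 : lam != 0. Proof. by rewrite gt_eqF. Qed.

Lemma d_ep (x : R) : is_derive x 1 ep (- lam * ep x).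
Proof. by rewrite /ep; apply: is_derive_eq; rewrite !scE; ring. Qed.
Lemma d_em (x : R) : is_derive x 1 em (lam * em x).
Proof. by rewrite /em; apply: is_derive_eq; rewrite !scE; ring. Qed.

Ltac dsolve := apply: is_derive_eq; rewrite !scE /ep /em;
  field; rewrite ?mulf_neq0 ?lam_neq0 ?pnatr_eq0 ?oner_eq0 //.

Definition dIC (k : nat) (x : R) :=
  k%:R * ((em x - ep x) / 2 + 1 - em x + lam * (t - x) * em x).
Definition dPC (k : nat) (x : R) :=
  k%:R * (em x - (ep x + em x) / 2 - lam * (t - x) * em x).

Lemma d_IA k (x : R) : is_derive x 1 (ca PhiI k) 0.
Proof. by apply: is_derive_eq; rewrite ?scE. Qed.
Lemma d_IB k (x : R) : is_derive x 1 (cb PhiI k) (- (lam * em x)).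
Proof. by rewrite /=; dsolve. Qed.
Lemma d_IC k (x : R) : is_derive x 1 (cc PhiI k) (dIC k x).
Proof. by rewrite /= /dIC; dsolve. Qed.
Lemma d_PA k (x : R) : is_derive x 1 (ca PhiP k) 0.
Proof. by apply: is_derive_eq; rewrite ?scE. Qed.
Lemma d_PB k (x : R) : is_derive x 1 (cb PhiP k) (lam * em x).
Proof. by rewrite /=; dsolve. Qed.
Lemma d_PC k (x : R) : is_derive x 1 (cc PhiP k) (dPC k x).
Proof. by rewrite /= /dPC; dsolve. Qed.
Definition tadd (T1 T2 : tri) : tri :=
  Tri (fun k u => ca T1 k u + ca T2 k u) (fun k u => cb T1 k u + cb T2 k u)
      (fun k u => cc T1 k u + cc T2 k u).
Definition teq (T1 T2 : tri) := forall k u, 0 <= u -> u <= t ->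
  [/\ ca T1 k u = ca T2 k u, cb T1 k u = cb T2 k u & cc T1 k u = cc T2 k u].

Lemma cont_of_d (F : R -> R) (f : R -> R) :
  (forall x : R, is_derive x 1 F (f x)) -> {within `[0,t], continuous F}.
Proof. by move=> hF; apply: continuous_subspaceT; exact: (@deriv_cont F f hF). Qed.

Lemma ctri_PhiI : ctri PhiI.
Proof.
move=> k; split; [exact: (@cont_of_d _ _ (d_IA k)) | exact: (@cont_of_d _ _ (d_IB k))
  | exact: (@cont_of_d _ _ (d_IC k))].
Qed.
Lemma ctri_PhiP : ctri PhiP.
Proof.
move=> k; split; [exact: (@cont_of_d _ _ (d_PA k)) | exact: (@cont_of_d _ _ (d_PB k))
  | exact: (@cont_of_d _ _ (d_PC k))].
Qed.

Lemma emt : em t = 1. Proof. by rewrite /em subrr mulr0 expR0. Qed.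
Lemma ept : ep t = 1. Proof. by rewrite /ep subrr mulr0 expR0. Qed.

Lemma harm_I : teq PhiI (tadd G0I (Op PhiI)).
Proof.
move=> k u u0 ut; have [ha hb hc] := ctri_H PhiI k ctri_PhiI.
split => /=.
- rewrite (@harm k _ _ _ u u0 ut (d_IA k) ha) //=; first ring.
  by move=> s; rewrite /Ha /=; ring.
- rewrite (@harm k _ _ _ u u0 ut (d_IB k) hb) //= ?emt; first ring.
  by move=> s; rewrite /Hb /=; ring.
- rewrite (@harm k _ _ _ u u0 ut (d_IC k) hc) //= ?emt ?ept; first by field; rewrite ?mulf_neq0 ?lam_neq0 ?pnatr_eq0.
  move=> s; rewrite /Hc /dIC /= -[k.+1]addn1 natrD.
  by rewrite /ep /em; field; rewrite ?mulf_neq0 ?lam_neq0.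
Qed.

Lemma harm_P : teq PhiP (tadd G0P (Op PhiP)).
Proof.
move=> k u u0 ut; have [ha hb hc] := ctri_H PhiP k ctri_PhiP.
split => /=.
- rewrite (@harm k _ _ _ u u0 ut (d_PA k) ha) //=; first ring.
  by move=> s; rewrite /Ha /=; ring.
- rewrite (@harm k _ _ _ u u0 ut (d_PB k) hb) //= ?emt; first ring.
  by move=> s; rewrite /Hb /=; ring.
- rewrite (@harm k _ _ _ u u0 ut (d_PC k) hc) //= ?emt ?ept; first by field; rewrite ?mulf_neq0 ?lam_neq0 ?pnatr_eq0.
  move=> s; rewrite /Hc /dPC /= -[k.+1]addn1 natrD.
  by rewrite /ep /em; field; rewrite ?mulf_neq0 ?lam_neq0.
Qed.
Lemma conv_add k h1 h2 u : 0 <= u -> {within `[0,t], continuous h1} ->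
  {within `[0,t], continuous h2} ->
  conv k (fun s => h1 s + h2 s) u = conv k h1 u + conv k h2 u.
Proof.
move=> u0 c1 c2; rewrite /conv -RintegralD //; try exact: cont_intE.
by apply: eq_Rintegral => s _; ring.
Qed.

Lemma conv_eq k h1 h2 u : 0 <= u ->
  (forall s, 0 <= s -> s <= t -> h1 s = h2 s) -> conv k h1 u = conv k h2 u.
Proof.
move=> u0 h; apply: eq_Rintegral => s; rewrite inE /= in_itv /= => /andP[us st].
by rewrite h // (le_trans u0 us).
Qed.

Lemma teq_trans T1 T2 T3 : teq T1 T2 -> teq T2 T3 -> teq T1 T3.
Proof.
move=> h1 h2 k u u0 ut; have [a1 b1 c1] := h1 k u u0 ut.
have [a2 b2 c2] := h2 k u u0 ut; split; congruence.
Qed.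

Lemma ctri_add T1 T2 : ctri T1 -> ctri T2 -> ctri (tadd T1 T2).
Proof.
move=> c1 c2 k; have [a1 b1 d1] := c1 k; have [a2 b2 d2] := c2 k.
by split; apply: wcD.
Qed.

Lemma Op_teq T1 T2 : teq T1 T2 -> teq (Op T1) (Op T2).
Proof.
move=> h k u u0 ut; split => /=; apply: conv_eq => // s s0 st;
  have [a b c] := h k.+1 s s0 st; rewrite /Ha /Hb /Hc ?a ?b ?c //.
Qed.

Lemma Op_add T1 T2 : ctri T1 -> ctri T2 ->
  teq (Op (tadd T1 T2)) (tadd (Op T1) (Op T2)).
Proof.
move=> c1 c2 k u u0 ut; have [a1 b1 d1] := ctri_H T1 k c1.
have [a2 b2 d2] := ctri_H T2 k c2.
split => /=; rewrite -conv_add //; apply: conv_eq => // s _ _;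
  rewrite /Ha /Hb /Hc /=; ring.
Qed.

Lemma Qm (Phi G0 : tri) : ctri Phi -> ctri G0 -> teq Phi (tadd G0 (Op Phi)) ->
  forall m, teq (iter m Op Phi) (tadd (iter m Op G0) (iter m.+1 Op Phi)).
Proof.
move=> cP cG hh; elim=> [|m IH] //.
refine (teq_trans _ _ _ (Op_teq _ _ IH) _).
apply: Op_add; [exact: iter_ctri|exact: (iter_ctri m.+1)].
Qed.

Lemma lin_teq T1 T2 u bs acc : teq T1 T2 -> 0 <= u -> u <= t ->
  lin T1 u bs acc = lin T2 u bs acc.
Proof. by move=> h u0 ut; have [a b c] := h (size bs) u u0 ut; rewrite /lin a b c. Qed.

Lemma psum (Phi G0 : tri) : ctri Phi -> ctri G0 -> teq Phi (tadd G0 (Op Phi)) ->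
  forall m u bs acc, 0 <= u -> u <= t ->
  \sum_(n < m) lin (iter n Op G0) u bs acc =
  lin Phi u bs acc - lin (iter m Op Phi) u bs acc.
Proof.
move=> cP cG hh; elim=> [|m IH] u bs acc u0 ut; first by rewrite big_ord0 /= subrr.
rewrite big_ord_recr /= IH // (lin_teq _ _ u bs acc (Qm _ _ cP cG hh m) u0 ut) /lin /=.
ring.
Qed.
Definition valid (u : R) (bs : seq R) (acc : R) :=
  (forall b, b \in bs -> 0 <= b <= u) /\ (0 <= acc <= (size bs)%:R * t).

Definition W (k : nat) (u : R) := k%:R * k.+1%:R * expR (2 * lam * (t - u)).

Lemma valid_split u bs acc i s : valid u bs acc -> (i < size bs)%N ->
  0 <= u -> u <= s -> s <= t ->
  valid s (split_lineage bs i s) (acc + (s - nth 0 bs i)).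
Proof.
move=> [hb /andP[a0 a1]] ib u0 us st; split.
  move=> b; rewrite /split_lineage !inE => /orP[/eqP->|/orP[/eqP->|]].
  - by rewrite lexx (le_trans u0 us).
  - by rewrite lexx (le_trans u0 us).
  rewrite mem_cat => /orP[/mem_take|/mem_drop] /hb /andP[b0 bu];
    by rewrite b0 (le_trans bu us).
have /hb /andP[n0 nu] := mem_nth 0 ib.
rewrite size_split // -addn1 natrD mulrDl mul1r; apply/andP; split.
  by rewrite addr_ge0 // subr_ge0 (le_trans nu us).
by rewrite lerD // lerBlDr (le_trans st) // lerDl.
Qed.

Lemma W_int k u : 0 <= u -> u <= t ->
  \int[mu]_(s in `[u,t]) (lam * E k u s * (k%:R * W k.+1 s)) <= W k u.
Proof.
move=> u0 ut.
pose e2 s := expR (2 * lam * (t - s)).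
have hd : forall x : R, is_derive x 1 (fun s => - (E k u s * e2 s))
    ((fun s => lam * k.+2%:R * (E k u s * e2 s)) x).
  move=> x; rewrite /E /e2; apply: is_derive_eq; rewrite !scE.
  rewrite -[k.+2]addn2 natrD; ring.
have hc : {within `[u,t], continuous (fun s => lam * k.+2%:R * (E k u s * e2 s))}.
  apply: continuous_subspaceT => x; apply: cvgM; first exact: cvg_cst.
  apply: cvgM; first exact: cont_expaff.
  have -> : e2 = fun s => expR (- (2 * lam) * (s - t)).
    by apply/funext => s; rewrite /e2; congr expR; ring.
  exact: cont_expaff.
have -> : \int[mu]_(s in `[u,t]) (lam * E k u s * (k%:R * W k.+1 s)) =
    \int[mu]_(s in `[u,t]) (k%:R * k.+1%:R * (lam * k.+2%:R * (E k u s * e2 s))).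
  by apply: eq_Rintegral => s _; rewrite /W /e2; ring.
rewrite RintegralZl //; last first.
  by apply: continuous_compact_integrable => //; exact: segment_compact.
rewrite (FTCw _ _ _ _ ut hd hc) /W /e2 -/(e2 u).
rewrite ler_wpM2l ?mulr_ge0 ?ler0n //.
rewrite /E !subrr !mulr0 expR0 mulr1 mul1r.
have := expR_ge0 (- lam * k%:R * (t - u)); lra.
Qed.
Lemma wc_norm (A : set R) (f : R -> R) : {within A, continuous f} ->
  {within A, continuous (fun x => `|f x|)}.
Proof. by move=> cf x; apply: cvg_norm; exact: cf. Qed.

Lemma e2_ge1 u : u <= t -> 1 <= expR (2 * lam * (t - u)).
Proof.
move=> ut; apply: le_trans (expR_ge1Dx _); rewrite lerDl.
by rewrite mulr_ge0 ?subr_ge0 // mulr_ge0 // ltW.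
Qed.

Lemma tail (Phi : tri) (M : R) : 0 <= M -> ctri Phi ->
  (forall u bs acc, 0 <= u -> u <= t -> valid u bs acc ->
     `|lin Phi u bs acc| <= M * (size bs)%:R) ->
  forall m u bs acc, 0 <= u -> u <= t -> valid u bs acc ->
  `|lin (iter m Op Phi) u bs acc| <= M / ((size bs + m).+1)%:R * W (size bs) u.
Proof.
move=> M0 cP hP; elim=> [|m IH] u bs acc u0 ut hv.
  rewrite addn0; apply: le_trans (hP _ _ _ u0 ut hv) _.
  rewrite /W.
  have -> : M / (size bs).+1%:R * ((size bs)%:R * (size bs).+1%:R *
      expR (2 * lam * (t - u))) = M * (size bs)%:R * expR (2 * lam * (t - u)).
    by field; rewrite -(natrD R 1) pnatr_eq0.
  rewrite -[leLHS]mulr1 ler_wpM2l ?mulr_ge0 ?ler0n //; exact: e2_ge1.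
set k := size bs.
have cT := iter_ctri m _ cP.
rewrite /= -comb_R //.
have ic : mu.-integrable `[u,t] (EFin \o comb (iter m Op Phi) k u bs acc).
  by apply: cont_int => //; exact: comb_cont.
apply: le_trans (le_normr_Rintegral _ ic) _ => //.
have hg : {within `[0,t], continuous (fun s => lam * E k u s * (k%:R * W k.+1 s))}.
  apply: wcM; first by apply: wcM; [exact: wcC|exact: wcE].
  apply: wcM; first exact: wcC.
  apply: wcM; first exact: wcC.
  apply: continuous_subspaceT => x.
  have -> : (fun s => expR (2 * lam * (t - s))) = fun s => expR (- (2 * lam) * (s - t)).
    by apply/funext => s; congr expR; ring.
  exact: cont_expaff.
apply: le_trans (_ : _ <= \int[mu]_(s in `[u,t])
   (M / ((k + m.+1).+1)%:R * (lam * E k u s * (k%:R * W k.+1 s)))) _.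
  apply: le_Rintegral => //.
  - by apply: cont_int => //; apply: wc_norm; exact: comb_cont.
  - by apply: cont_int => //; apply: wcM => //; exact: wcC.
  move=> s; rewrite /= in_itv /= => /andP[us st].
  rewrite -comb_pt; apply: le_trans (ler_norm_sum _ _ _) _.
  apply: le_trans (_ : _ <= \sum_(i < k) (lam * E k u s *
      (M / ((k.+1 + m).+1)%:R * W k.+1 s))) _.
    apply: ler_sum => i _; rewrite normrM ger0_norm; last first.
      by rewrite mulr_ge0 ?expR_ge0 // ltW.
    apply: ler_wpM2l; first by rewrite mulr_ge0 ?expR_ge0 // ltW.
    have := IH s (split_lineage bs i s) (acc + (s - nth 0 bs i)) (le_trans u0 us) st
      (valid_split _ _ _ _ _ hv (ltn_ord i) u0 us st).
    by rewrite size_split.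
  rewrite sumr_const card_ord addSnnS -[_ *+ k]mulr_natr le_eqVlt; apply/orP; left; apply/eqP; ring.
rewrite RintegralZl //; last by apply: cont_int.
by apply: ler_wpM2l; [rewrite divr_ge0 ?ler0n|exact: W_int].
Qed.
Lemma SD_bnd (bs : seq R) : (forall b, b \in bs -> 0 <= b <= t) ->
  0 <= SD bs <= (size bs)%:R * t.
Proof.
elim: bs => [|b bs IH] hb; first by rewrite /SD big_nil /= mul0r lexx.
have /andP[b0 bt] := hb b (mem_head _ _).
have /andP[s0 st] : 0 <= SD bs <= (size bs)%:R * t.
  by apply: IH => c cb; apply: hb; rewrite inE cb orbT.
rewrite /SD big_cons -/(SD bs) /= -addn1 natrD; apply/andP; split; lra.
Qed.

Lemma em_bnd u : u <= t -> 0 <= em u <= 1.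
Proof.
move=> ut; rewrite expR_ge0 /= /em expR_le1.
by rewrite mulNr oppr_le0 mulr_ge0 ?subr_ge0 // ltW.
Qed.

Lemma ep_bnd u : 0 <= u -> 0 <= ep u <= expR (lam * t).
Proof.
move=> u0; rewrite expR_ge0 /= /ep ler_expR; apply: ler_wpM2l; [exact: ltW|lra].
Qed.

Definition Mb := 3 * t + (expR (lam * t) + 3) / lam.

Lemma Mb_ge0 : 0 <= Mb.
Proof.
rewrite /Mb; apply: addr_ge0; first exact: mulr_ge0.
by apply: divr_ge0; [have := expR_ge0 (lam * t); lra|exact: ltW].
Qed.

Lemma valid_bs u bs acc : valid u bs acc -> u <= t ->
  forall b, b \in bs -> 0 <= b <= t.
Proof.
by move=> [hb _] ut b /hb /andP[b0 bu]; rewrite b0 (le_trans bu ut).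
Qed.

Lemma bound_I u bs acc : 0 <= u -> u <= t -> valid u bs acc ->
  `|lin PhiI u bs acc| <= Mb * (size bs)%:R.
Proof.
move=> u0 ut hv; have /andP[s0 s1] := SD_bnd _ (valid_bs _ _ _ hv ut).
have [_ /andP[a0 a1]] := hv.
have /andP[m0 m1] := em_bnd _ ut; have /andP[p0 p1] := ep_bnd _ u0.
set K := (size bs)%:R; have K0 : 0 <= K by exact: ler0n.
set il := lam^-1; have il0 : 0 < il by rewrite invr_gt0.
set g := (ep u + em u - 2) / (2 * lam) - (t - u) * (1 - em u).
have hg : - ((expR (lam * t) + 3) * il + t) <= g <= (expR (lam * t) + 3) * il + t.
  have e1 : (ep u + em u - 2) / (2 * lam) = (ep u + em u - 2) * il / 2.
    by rewrite /il; field; rewrite lam_neq0.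
  have h1 : -3 * il <= (ep u + em u - 2) * il.
    by rewrite ler_wpM2r ?ltW //; lra.
  have h2 : (ep u + em u - 2) * il <= (expR (lam * t) + 3) * il.
    by rewrite ler_wpM2r ?ltW //; lra.
  have h3 : 0 <= (t - u) * (1 - em u) <= t by apply/andP; split; nra.
  rewrite /g e1; apply/andP; split; nra.
have hKg : - (K * ((expR (lam * t) + 3) * il + t)) <= K * g <=
    K * ((expR (lam * t) + 3) * il + t).
  by case/andP: hg => g1 g2; apply/andP; split; nra.
have hS : 0 <= (1 - em u) * SD bs <= K * t by apply/andP; split; nra.
rewrite /lin /= -/K -/g ler_norml /Mb /il.
apply/andP; split; rewrite /il in hKg; nra.
Qed.

Lemma bound_P u bs acc : 0 <= u -> u <= t -> valid u bs acc ->
  `|lin PhiP u bs acc| <= Mb * (size bs)%:R.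
Proof.
move=> u0 ut hv; have /andP[s0 s1] := SD_bnd _ (valid_bs _ _ _ hv ut).
have /andP[m0 m1] := em_bnd _ ut; have /andP[p0 p1] := ep_bnd _ u0.
set K := (size bs)%:R; have K0 : 0 <= K by exact: ler0n.
set il := lam^-1; have il0 : 0 < il by rewrite invr_gt0.
set g := (ep u - em u) / (2 * lam) - (t - u) * em u.
have hg : - ((expR (lam * t) + 3) * il + t) <= g <= (expR (lam * t) + 3) * il + t.
  have e1 : (ep u - em u) / (2 * lam) = (ep u - em u) * il / 2.
    by rewrite /il; field; rewrite lam_neq0.
  have h1 : -3 * il <= (ep u - em u) * il.
    by rewrite ler_wpM2r ?ltW //; lra.
  have h2 : (ep u - em u) * il <= (expR (lam * t) + 3) * il.
    by rewrite ler_wpM2r ?ltW //; lra.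
  have h3 : 0 <= (t - u) * em u <= t by apply/andP; split; nra.
  rewrite /g e1; apply/andP; split; nra.
have hKg : - (K * ((expR (lam * t) + 3) * il + t)) <= K * g <=
    K * ((expR (lam * t) + 3) * il + t).
  by case/andP: hg => g1 g2; apply/andP; split; nra.
have hS : 0 <= em u * SD bs <= K * t by apply/andP; split; nra.
rewrite /lin /= -/K -/g ler_norml /Mb /il.
apply/andP; split; rewrite /il in hKg; nra.
Qed.
Lemma valid_init : valid 0 [:: 0; 0] 0.
Proof.
split; first by move=> b; rewrite !inE => /orP[]/eqP->; rewrite lexx.
by rewrite lexx /= mulr_ge0 // ler0n.
Qed.

Lemma cvg_r (r : nat -> R) (K : R) : (forall m, `|r m| <= K * harmonic m) ->
  r @ \oo --> 0.
Proof.
move=> hr.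
have hK : (fun m => K * harmonic m) @ \oo --> (0 : R).
  rewrite -(mulr0 K); apply: cvgM; [exact: cvg_cst|exact: cvg_harmonic].
have hK' : (fun m => - (K * harmonic m)) @ \oo --> (0 : R).
  by rewrite -oppr0; apply: cvgN.
apply: (squeeze_cvgr _ hK' hK); apply: nearW => m.
by have := hr m; rewrite ler_norml.
Qed.

Lemma series_eq (Phi G0 : tri) (f : seq R -> R -> \bar R) :
  ctri Phi -> ctri G0 -> teq Phi (tadd G0 (Op Phi)) ->
  (forall u bs acc, 0 <= u -> u <= t -> valid u bs acc ->
     `|lin Phi u bs acc| <= Mb * (size bs)%:R) ->
  (forall n, yuleG lam t f n 0 [:: 0; 0] 0 = (lin (iter n Op G0) 0 [:: 0; 0] 0)%:E) ->
  yule_expect lam t f = (lin Phi 0 [:: 0; 0] 0)%:E.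
Proof.
move=> cP cG hh hb hG.
pose c := lin Phi 0 [:: 0; 0] 0.
pose r m := lin (iter m Op Phi) 0 [:: 0; 0] 0.
have E1 : (fun m => (\sum_(0 <= i < m) yuleG lam t f i 0%R [:: 0%R; 0%R] 0%R)%E) =
    EFin \o (fun m => c - r m).
  apply/funext => m /=; rewrite big_mkord.
  under eq_bigr => i _ do rewrite hG.
  by rewrite sumEFin (psum _ _ cP cG hh m 0 [:: 0; 0] 0 (lexx 0) ht).
have Sc : (fun m => c - r m) @ \oo --> c.
  rewrite -[X in _ --> X]subr0; apply: cvgB; first exact: cvg_cst.
  apply: (@cvg_r _ (Mb * W 2 0)) => m.
  have := tail _ _ Mb_ge0 cP hb m 0 [:: 0; 0] 0 (lexx 0) ht valid_init.
  move=> /le_trans; apply; rewrite /= [X in X <= _]mulrAC.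
  apply: ler_wpM2l.
    by rewrite mulr_ge0 ?Mb_ge0 // /W mulr_ge0 ?expR_ge0 // mulr_ge0 ?ler0n.
  by rewrite lef_pV2 ?posrE ?ltr0n // ler_nat ltnS leq_addl.
rewrite /yule_expect E1 EFin_lim; last by apply/cvg_ex; exists c.
by rewrite (cvg_lim _ Sc).
Qed.
Lemma yule_I_val :
  yule_I lam t = ((expR (lam * t) + expR (- (lam * t)) - 2) / lam)%:E.
Proof.
rewrite /yule_I (series_eq _ _ _ ctri_PhiI ctri_G0I harm_I bound_I); last first.
  by move=> n; rewrite yuleG_I.
congr EFin; rewrite /lin /= /SD !big_cons big_nil /ep /em !subr0 mulNr.
by field; rewrite lam_neq0.
Qed.

Lemma yule_P_val :
  yule_P lam t = ((expR (lam * t) - expR (- (lam * t))) / lam)%:E.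
Proof.
rewrite /yule_P (series_eq _ _ _ ctri_PhiP ctri_G0P harm_P bound_P); last first.
  by move=> n; rewrite yuleG_P.
congr EFin; rewrite /lin /= /SD !big_cons big_nil /ep /em !subr0 mulNr.
by field; rewrite lam_neq0.
Qed.
End Yule.

Theorem theorem4 (R : realType) (lam : R) (hlam : 0 < lam) :
  (forall t : R, 0 <= t ->
     yule_I lam t = ((expR (lam * t) + expR (- (lam * t)) - 2) / lam)%:E /\
     yule_P lam t = ((expR (lam * t) - expR (- (lam * t))) / lam)%:E) /\
  (exists C c : R, 0 < C /\ 0 < c /\
     forall t : R, 0 < t ->
       `| yule_p lam t / yule_i lam t - 1 | <= C * expR (- (c * t))).
Proof.
split.
  by move=> t ht; split; [exact: (yule_I_val _ _ _ hlam ht)|exact: (yule_P_val _ _ _ hlam ht)].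
exists 1, lam; split; first exact: ltr01.
split; first exact: hlam.
move=> t ht.
rewrite /yule_p /yule_i (yule_P_val _ _ _ hlam (ltW ht)) (yule_I_val _ _ _ hlam (ltW ht)) /=.
have a1 : 1 < expR (lam * t).
  apply: lt_le_trans (expR_ge1Dx _); rewrite ltrDl mulr_gt0 //.
have a0 : 0 < expR (lam * t) := expR_gt0 _.
rewrite expRN.
set a := expR (lam * t).
rewrite -/a in a1 a0.
have -> : (a - a^-1) / lam / (2 * a) / ((a + a^-1 - 2) / lam / (2 * a - 2)) - 1 = a^-1.
  field; apply/and4P; split.
  - by rewrite gt_eqF.
  - by apply/eqP => h; lra.
  - by rewrite gt_eqF.
  - by apply/eqP => h; nra.
by rewrite mul1r ger0_norm // invr_ge0 ltW.
Qed.
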